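(* Consider any class of quantum circuits whose allowed gates include the Hadamard gate and the controlled-not gate. Then, for each $n$, the following three statements are equivalent (where ''constant depth'' means depth bounded independently of $n$): (1) It is possible, in constant depth, to map the state $(\alpha|0\rangle+\beta|1\rangle)\otimes|0\rangle^{\otimes(n-1)}$ (one data qubit and $n-1$ work bits in state $|0\rangle$) onto the $n$-qubit cat state $\alpha|00\cdots0\rangle+\beta|11\cdots1\rangle$. (2) The $n$-ary fanout gate can be implemented in constant depth with at most $n-1$ additional work bits. (3) An $n$-ary parity gate can be implemented in constant depth with at most $n-1$ additional work bits.
   Context: The Hadamard gate is the one-qubit gate $H=\frac{1}{\sqrt2}\begin{pmatrix}1&1\\1&-1\end{pmatrix}$. The controlled-not gate maps $|x,y\rangle\mapsto|x,y\oplus x\rangle$ on basis states. The $n$-ary fanout gate is the product of $n$ controlled-not gates with a common control qubit: it maps basis states $|y_1,\ldots,y_n,x\rangle\mapsto|y_1\oplus x,\ldots,y_n\oplus x,x\rangle$. For a Boolean $m$-tuple, $\mathrm{Mod}_q(y_1,\ldots,y_m)=1$ iff $\sum_i y_i\not\equiv0\pmod q$; the quantum $\mathrm{MOD}_q$ gate maps $|y_1,\ldots,y_m,x\rangle\mapsto|y_1,\ldots,y_m,x\oplus\mathrm{Mod}_q(y_1,\ldots,y_m)\rangle$, and an $n$-ary parity gate is a $\mathrm{MOD}_2$ gate. Work bits are auxiliary qubits that start (and, for implementing a gate, end) in state $|0\rangle$. *)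

(* Defs.v *)
(* Scalars: an arbitrary numClosedFieldType C (e.g. the
   complex numbers), which provides conjugation and square roots. *)
From HB Require Import structures.
From mathcomp Require Import all_boot all_order all_algebra.
Set Implicit Arguments. Unset Strict Implicit. Unset Printing Implicit Defensive.
Import Order.TTheory GRing.Theory Num.Theory.
Local Open Scope ring_scope.

(* computational basis states of m qubits *)
Definition bits (m : nat) := {ffun 'I_m -> bool}.

Section Quantum.
Variable C : numClosedFieldType.

(* an operator on m qubits, by its matrix entries  <x| U |y> *)
Definition op (m : nat) := bits m -> bits m -> C.
(* an (unnormalised) state vector on m qubits *)
Definition state (m : nat) := bits m -> C.

Definition idop (m : nat) : op m := fun x y => (x == y)%:R.
Definition mulop (m : nat) (U V : op m) : op m :=
  fun x z => \sum_(y : bits m) U x y * V y z.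
Definition apply (m : nat) (U : op m) (psi : state m) : state m :=
  fun x => \sum_(y : bits m) U x y * psi y.
Definition adjoint (m : nat) (U : op m) : op m := fun x y => (U y x)^*.
Definition unitary (m : nat) (U : op m) : Prop :=
  forall x y, mulop (adjoint U) U x y = @idop m x y /\
              mulop U (adjoint U) x y = @idop m x y.

Definition ket (m : nat) (b : bits m) : state m := fun x => (x == b)%:R.

Definition hadamard : op 1 :=
  fun x y => (if x ord0 && y ord0 then -1 else 1) / sqrtC 2.
(* controlled-not: qubit 0 is the control, qubit 1 the target:
   |x,y> |-> |x, y xor x> *)
Definition cnot_map (y : bits 2) : bits 2 :=
  [ffun i => if i == ord_max then y ord_max (+) y ord0 else y i].
Definition cnot : op 2 := fun x y => (x == cnot_map y)%:R.

(* a gate U on k qubits placed on the wires w of an m-qubit register *)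
Record gate_app (m : nat) := GateApp {
  ga_k : nat;
  ga_U : op ga_k;
  ga_w : 'I_ga_k -> 'I_m }.

Definition ga_wires (m : nat) (g : gate_app m) : {set 'I_m} :=
  [set @ga_w m g j | j in 'I_(ga_k g)].

Definition embed (m : nat) (g : gate_app m) : op m :=
  fun x y =>
    if [forall i, (i \in ga_wires g) || (x i == y i)]
    then @ga_U m g [ffun j => x (@ga_w m g j)] [ffun j => y (@ga_w m g j)]
    else 0.

(* a layer: gates acting on pairwise disjoint sets of wires (depth one) *)
Definition layer (m : nat) := seq (gate_app m).
Definition layer_op (m : nat) (L : layer m) : op m :=
  foldr (fun g acc => mulop (embed g) acc) (@idop m) L.

(* a circuit: its list of layers, first layer applied first *)
Definition circuit (m : nat) := seq (layer m).
Definition circ_op (m : nat) (c : circuit m) : op m :=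
  foldr (fun L acc => mulop acc (layer_op L)) (@idop m) c.

Definition gate_class := forall k : nat, op k -> Prop.

Definition valid_layer (G : gate_class) (m : nat) (L : layer m) : Prop :=
  foldr (fun g P => (G (ga_k g) (@ga_U m g) /\ injective (@ga_w m g)) /\ P)
    True L /\
  pairwise (fun g h : gate_app m => [disjoint ga_wires g & ga_wires h]) L.

Definition valid_circuit (G : gate_class) (m : nat) (c : circuit m) : Prop :=
  foldr (fun L P => valid_layer G L /\ P) True c.

Definition depth_le (m : nat) (c : circuit m) (d : nat) : Prop := (size c <= d)%N.

Definition pad (n a : nat) (x : bits n) : bits (n + a) :=
  [ffun i => match split i with inl j => x j | inr _ => false end].

(* a classical reversible map f on n qubits implemented by c with a work bits *)
Definition implements (n a : nat) (c : circuit (n + a)) (f : bits n -> bits n)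
  : Prop :=
  forall x : bits n, apply (circ_op c) (ket (pad a x)) = ket (pad a (f x)).

(* n-ary fanout on n+1 qubits: y_1..y_n (wires 0..n-1), control x (wire n) *)
Definition fanout_map (n : nat) (x : bits n.+1) : bits n.+1 :=
  [ffun i => if i == ord_max then x i else x i (+) x ord_max].

(* n-ary parity (MOD_2) gate on n+1 qubits: inputs y_1..y_n, target x *)
Definition Mod_q (q n : nat) (x : bits n.+1) : bool :=
  (#|[set i : 'I_n.+1 | (i != ord_max) && x i]| %% q != 0)%N.
Definition parity_map (n : nat) (x : bits n.+1) : bits n.+1 :=
  [ffun i => if i == ord_max then x i (+) Mod_q 2 x else x i].

(* statement (1): cat state from one data qubit (wire 0) and n-1 work bits *)
Definition zeros (n : nat) : bits n := [ffun _ => false].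
Definition ones (n : nat) : bits n := [ffun _ => true].
Definition e0 (n : nat) : bits n := [ffun i => val i == 0%N].

Definition cat_in_depth (G : gate_class) (n d : nat) : Prop :=
  exists c : circuit n, valid_circuit G c /\ depth_le c d /\
    forall alpha beta : C,
      apply (circ_op c) (fun x => alpha * ket (zeros n) x + beta * ket (e0 n) x)
      = (fun x => alpha * ket (zeros n) x + beta * ket (ones n) x).

Definition fanout_in_depth (G : gate_class) (n d : nat) : Prop :=
  exists a, (a <= n - 1)%N /\ exists c : circuit (n.+1 + a),
    valid_circuit G c /\ depth_le c d /\ implements c (@fanout_map n).

Definition parity_in_depth (G : gate_class) (n d : nat) : Prop :=
  exists a, (a <= n - 1)%N /\ exists c : circuit (n.+1 + a),
    valid_circuit G c /\ depth_le c d /\ implements c (@parity_map n).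

End Quantum.

(* Main.v *)
Require Import Defs.
From mathcomp Require Import all_boot all_order all_algebra.
From mathcomp Require Import zify.
From Stdlib Require Import FunctionalExtensionality.
Set Implicit Arguments. Unset Strict Implicit. Unset Printing Implicit Defensive.
Import Order.TTheory GRing.Theory Num.Theory.
Local Open Scope ring_scope.

Section Q.
Variable C : numClosedFieldType.

Notation op := (op C).
Notation state := (state C).
Notation ket := (@ket C _).
Notation idop := (@idop C _).

Lemma sum_delta m (x : bits m) (F : bits m -> C) :
  \sum_(y : bits m) (x == y)%:R * F y = F x.
Proof.
rewrite (bigD1 x) //= eqxx mul1r big1 ?addr0 // => y Hy.
by rewrite eq_sym (negbTE Hy) mul0r.
Qed.

Lemma sum_delta' m (x : bits m) (F : bits m -> C) :
  \sum_(y : bits m) F y * (y == x)%:R = F x.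
Proof.
rewrite -[RHS](sum_delta x); apply: eq_bigr => y _.
by rewrite mulrC eq_sym.
Qed.

Lemma mulopA m (A B D : op m) : mulop (mulop A B) D = mulop A (mulop B D).
Proof.
apply: functional_extensionality => x; apply: functional_extensionality => z.
rewrite /mulop.
under eq_bigr do rewrite mulr_suml.
rewrite exchange_big /=; apply: eq_bigr => w _.
rewrite mulr_sumr; apply: eq_bigr => y _; by rewrite mulrA.
Qed.

Lemma mul1op m (A : op m) : mulop (idop : op m) A = A.
Proof.
apply: functional_extensionality => x; apply: functional_extensionality => z.
by rewrite /mulop /idop sum_delta.
Qed.

Lemma mulop1 m (A : op m) : mulop A (idop : op m) = A.
Proof.
apply: functional_extensionality => x; apply: functional_extensionality => z.
rewrite /mulop /idop -[RHS](sum_delta' z (A x)); apply: eq_bigr => y _.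
by rewrite eq_sym.
Qed.

Lemma apply_mul m (A B : op m) psi : apply (mulop A B) psi = apply A (apply B psi).
Proof.
apply: functional_extensionality => x; rewrite /apply /mulop.
under eq_bigr do rewrite mulr_suml.
rewrite exchange_big /=; apply: eq_bigr => w _.
rewrite mulr_sumr; apply: eq_bigr => y _; by rewrite mulrA.
Qed.

Lemma apply_id m psi : apply (idop : op m) psi = psi.
Proof. by apply: functional_extensionality => x; rewrite /apply /idop sum_delta. Qed.

Lemma apply_ket m (A : op m) b : apply A (ket b) = fun x => A x b.
Proof.
apply: functional_extensionality => x; rewrite /apply /ket sum_delta'.
by [].
Qed.

Lemma apply_lin2 m (A : op m) (al be : C) (p q : state m) :
  apply A (fun x => al * p x + be * q x) = fun x => al * apply A p x + be * apply A q x.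
Proof.
apply: functional_extensionality => x; rewrite /apply.
rewrite !mulr_sumr -big_split /=; apply: eq_bigr => y _.
by rewrite mulrDr !mulrA [A x y * _]mulrC [A x y * be]mulrC.
Qed.

Lemma adjoint_mul m (A B : op m) : adjoint (mulop A B) = mulop (adjoint B) (adjoint A).
Proof.
apply: functional_extensionality => x; apply: functional_extensionality => z.
rewrite /adjoint /mulop rmorph_sum; apply: eq_bigr => y _.
by rewrite rmorphM mulrC.
Qed.

Lemma adjoint_id m : adjoint (idop : op m) = (idop : op m).
Proof.
apply: functional_extensionality => x; apply: functional_extensionality => z.
by rewrite /adjoint /idop conjC_nat eq_sym.
Qed.

Lemma circ_cat m (c1 c2 : circuit C m) :
  circ_op (c1 ++ c2) = mulop (circ_op c2) (circ_op c1).
Proof.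
elim: c1 => [|L c IH] /=; first by rewrite mulop1.
by rewrite IH mulopA.
Qed.

Lemma layer_cat m (L1 L2 : layer C m) :
  layer_op (L1 ++ L2) = mulop (layer_op L1) (layer_op L2).
Proof.
elim: L1 => [|g L IH] /=; first by rewrite mul1op.
by rewrite IH mulopA.
Qed.


Definition img k m (f : 'I_k -> 'I_m) : {set 'I_m} := [set f j | j in 'I_k].
Definition agree m (S : {set 'I_m}) (x y : bits m) :=
  [forall i, (i \in S) || (x i == y i)].
Definition restr k m (f : 'I_k -> 'I_m) (x : bits m) : bits k := [ffun j => x (f j)].
Definition Rl k m (f : 'I_k -> 'I_m) (A : op k) : op m :=
  fun x y => if agree (img f) x y then A (restr f x) (restr f y) else 0.
Definition merge k m (b : bits m) (f : 'I_k -> 'I_m) (v : bits k) : bits m :=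
  [ffun i => if [pick j | f j == i] is Some j then v j else b i].

Lemma embedE m (g : gate_app C m) : embed g = Rl (@ga_w C m g) (@ga_U C m g).
Proof. by []. Qed.

Lemma agreeP m (S : {set 'I_m}) (x y : bits m) :
  reflect (forall i, i \notin S -> x i = y i) (agree S x y).
Proof.
apply: (iffP forallP) => H i.
  by move=> Hi; move: (H i); rewrite (negbTE Hi) => /eqP.
by case: (boolP (i \in S)) => //= Hi; rewrite H.
Qed.

Lemma agree_sym m (S : {set 'I_m}) (x y : bits m) : agree S x y = agree S y x.
Proof.
by apply/agreeP/agreeP => H i Hi; rewrite H.
Qed.

Lemma agree_trans m (S : {set 'I_m}) (x y z : bits m) :
  agree S x y -> agree S y z -> agree S x z.
Proof.
by move=> /agreeP H1 /agreeP H2; apply/agreeP => i Hi; rewrite H1 // H2.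
Qed.

Lemma img_in k m (f : 'I_k -> 'I_m) j : f j \in img f.
Proof. by apply/imsetP; exists j. Qed.

Lemma img_notin k m (f : 'I_k -> 'I_m) i : (forall j, f j != i) -> i \notin img f.
Proof. by move=> H; apply/imsetP => [[j _ Hj]]; move: (H j); rewrite Hj eqxx. Qed.

Section Merge.
Variables (k m : nat) (f : 'I_k -> 'I_m) (finj : injective f).

Lemma merge_in b v j : merge b f v (f j) = v j.
Proof.
rewrite /merge ffunE; case: pickP => [j' /eqP /finj -> //|/(_ j)].
by rewrite eqxx.
Qed.

Lemma merge_out b v i : i \notin img f -> merge b f v i = b i.
Proof.
move=> Hi; rewrite /merge ffunE; case: pickP => [j /eqP Hj|//].
by move: Hi; rewrite -Hj img_in.
Qed.

Lemma restr_merge b v : restr f (merge b f v) = v.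
Proof. by apply/ffunP => j; rewrite ffunE merge_in. Qed.

Lemma agree_merge b v : agree (img f) (merge b f v) b.
Proof. by apply/agreeP => i Hi; rewrite merge_out. Qed.

Lemma merge_restr b y : agree (img f) y b -> merge b f (restr f y) = y.
Proof.
move=> /agreeP H; apply/ffunP => i.
case: (boolP (i \in img f)) => Hi.
  by case/imsetP: Hi => j _ ->; rewrite merge_in ffunE.
by rewrite merge_out // H.
Qed.

Lemma merge_eq b v y : (y == merge b f v) = agree (img f) y b && (restr f y == v).
Proof.
apply/eqP/andP => [->|[H /eqP <-]]; last by rewrite merge_restr.
by rewrite agree_merge restr_merge.
Qed.

Lemma reindex_agree b (F : bits m -> C) :
  \sum_(y | agree (img f) y b) F y = \sum_(v : bits k) F (merge b f v).
Proof.
rewrite (reindex_onto (merge b f) (restr f)); last by move=> y; apply: merge_restr.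
by apply: eq_bigl => v; rewrite agree_merge restr_merge eqxx.
Qed.

Lemma Rl_mul (A B : op k) : Rl f (mulop A B) = mulop (Rl f A) (Rl f B).
Proof.
apply: functional_extensionality => x; apply: functional_extensionality => z.
rewrite /Rl /mulop.
case: (boolP (agree (img f) x z)) => Hxz; last first.
  apply/esym/big1 => y _.
  case: (boolP (agree (img f) x y)) => Hxy; last by rewrite mul0r.
  case: (boolP (agree (img f) y z)) => Hyz; last by rewrite mulr0.
  by move: Hxz; rewrite (agree_trans Hxy Hyz).
transitivity (\sum_(y | agree (img f) y x)
    A (restr f x) (restr f y) * B (restr f y) (restr f z)); last first.
  rewrite [RHS](bigID (fun y => agree (img f) y x)) /= [X in _ = _ + X]big1 ?addr0.
    apply: eq_bigr => y Hy; rewrite agree_sym Hy.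
    by rewrite (agree_trans Hy Hxz).
  move=> y Hy; rewrite agree_sym (negbTE Hy) mul0r //.
rewrite reindex_agree; apply: eq_bigr => v _.
by rewrite restr_merge.
Qed.

Lemma Rl_id : Rl f (idop : op k) = (idop : op m).
Proof.
apply: functional_extensionality => x; apply: functional_extensionality => y.
rewrite /Rl /Defs.idop.
case: (boolP (agree (img f) x y)) => H.
  suff -> : (restr f x == restr f y) = (x == y) by [].
  apply/eqP/eqP => [E|->//].
  have Hy : agree (img f) y y by apply/agreeP.
  by rewrite -(merge_restr H) E merge_restr.
have : x != y by apply: contraNneq H => ->; apply/agreeP.
by move/negbTE => E; rewrite /Defs.idop E.
Qed.

End Merge.

Lemma Rl_adj k m (f : 'I_k -> 'I_m) (A : op k) : Rl f (adjoint A) = adjoint (Rl f A).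
Proof.
apply: functional_extensionality => x; apply: functional_extensionality => y.
by rewrite /Rl /adjoint agree_sym; case: ifP; rewrite ?conjC0.
Qed.

Lemma Rl_comp k l m (g : 'I_k -> 'I_l) (f : 'I_l -> 'I_m) (A : op k) :
  injective f -> Rl f (Rl g A) = Rl (f \o g) A.
Proof.
move=> finj.
apply: functional_extensionality => x; apply: functional_extensionality => y.
rewrite /Rl.
have Er z : restr g (restr f z) = restr (f \o g) z by apply/ffunP => j; rewrite !ffunE.
rewrite !Er.
have Hag : agree (img f) x y && agree (img g) (restr f x) (restr f y)
          = agree (img (f \o g)) x y.
  apply/andP/agreeP => [[/agreeP H1 /agreeP H2] i Hi|H].
    case: (boolP (i \in img f)) => Hf; last by rewrite H1.
    case/imsetP: Hf => j _ Ei; subst i.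
    have := H2 j; rewrite !ffunE; apply.
    apply/imsetP => [[j' _ Ej]]; move: Hi; rewrite Ej.
    by rewrite (img_in (f \o g)).
  split; apply/agreeP => i Hi.
    apply: H; apply/imsetP => [[j _ Ej]]; move: Hi; rewrite Ej /=.
    by rewrite img_in.
  rewrite !ffunE; apply: H; apply/imsetP => [[j _ /= /finj Ej]].
  by move: Hi; rewrite Ej img_in.
move: Hag; case: (agree (img f) x y); case: (agree (img g) _ _);
  by case: (agree (img (f \o g)) x y).
Qed.


Lemma foldr_and_cat T (Q : T -> Prop) (s1 s2 : seq T) :
  foldr (fun g P => Q g /\ P) True (s1 ++ s2) <->
  foldr (fun g P => Q g /\ P) True s1 /\ foldr (fun g P => Q g /\ P) True s2.
Proof.
elim: s1 => [|g s IH] /=; first by split => // [[]].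
move: IH; tauto.
Qed.

Lemma foldr_and_rev T (Q : T -> Prop) (s : seq T) :
  foldr (fun g P => Q g /\ P) True s -> foldr (fun g P => Q g /\ P) True (rev s).
Proof.
elim: s => [|g s IH] //= [Hg Hs].
by rewrite rev_cons -cats1; apply/foldr_and_cat; split; [apply: IH|].
Qed.

Lemma foldr_and_map T U (Q : T -> Prop) (Q' : U -> Prop) (h : U -> T) (s : seq U) :
  (forall u, Q' u -> Q (h u)) ->
  foldr (fun g P => Q' g /\ P) True s -> foldr (fun g P => Q g /\ P) True (map h s).
Proof.
move=> H; elim: s => [|g s IH] //= [Hg Hs]; split; [exact: H | exact: IH].
Qed.

Lemma pairwise_rev_sym T (r : rel T) (s : seq T) :
  (forall x y, r x y = r y x) -> pairwise r s -> pairwise r (rev s).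
Proof.
move=> rs; elim: s => [|x s IH] //= /andP [Hx Hs].
rewrite rev_cons -cats1 pairwise_cat IH //= !andbT.
rewrite /allrel all_rev; move: Hx; apply: sub_all => y /=; by rewrite andbT rs.
Qed.

Definition relabel_ga k m (f : 'I_k -> 'I_m) (g : gate_app C k) : gate_app C m :=
  GateApp (@ga_U C k g) (f \o @ga_w C k g).
Definition relabel_c k m (f : 'I_k -> 'I_m) (c : circuit C k) : circuit C m :=
  map (map (relabel_ga f)) c.

Section Relabel.
Variables (k m : nat) (f : 'I_k -> 'I_m) (finj : injective f).

Lemma embed_relabel g : embed (relabel_ga f g) = Rl f (embed g).
Proof. by rewrite !embedE Rl_comp. Qed.

Lemma layer_relabel L : layer_op (map (relabel_ga f) L) = Rl f (layer_op L).
Proof.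
elim: L => [|g L IH] /=; first by rewrite Rl_id.
by rewrite IH embed_relabel Rl_mul.
Qed.

Lemma circ_relabel c : circ_op (relabel_c f c) = Rl f (circ_op c).
Proof.
elim: c => [|L c IH] /=; first by rewrite Rl_id.
by rewrite IH layer_relabel Rl_mul.
Qed.

Lemma img_comp l (w : 'I_l -> 'I_k) : img (f \o w) = f @: img w.
Proof. by rewrite /img -imset_comp. Qed.

Lemma valid_relabel G c : valid_circuit G c -> valid_circuit G (relabel_c f c).
Proof.
apply: foldr_and_map => L [H1 H2]; split.
  apply: foldr_and_map H1 => g [HG Hinj]; split => //=.
  by apply: inj_comp.
rewrite pairwise_map; apply: sub_pairwise H2 => g h /= Hd.
rewrite /ga_wires /= -!/(img _) !img_comp.
rewrite -setI_eq0; apply/eqP/setP => i; rewrite !inE.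
apply/negbTE/andP => [[/imsetP [j1 Hj1 ->] /imsetP [j2 Hj2 /finj E]]].
by move: (disjointFr Hd Hj1); rewrite E Hj2.
Qed.

End Relabel.

Definition inv_ga m (g : gate_app C m) : gate_app C m :=
  GateApp (adjoint (@ga_U C m g)) (@ga_w C m g).
Definition inv_layer m (L : layer C m) : layer C m := rev (map (@inv_ga m) L).
Definition inv_c m (c : circuit C m) : circuit C m := rev (map (@inv_layer m) c).

Lemma layer_inv m (L : layer C m) : layer_op (inv_layer L) = adjoint (layer_op L).
Proof.
elim: L => [|g L IH] /=; first by rewrite adjoint_id.
rewrite /inv_layer /= rev_cons -cats1 layer_cat -/(inv_layer L) IH /=.
by rewrite mulop1 adjoint_mul embedE Rl_adj.
Qed.

Lemma circ_inv m (c : circuit C m) : circ_op (inv_c c) = adjoint (circ_op c).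
Proof.
elim: c => [|L c IH] /=; first by rewrite adjoint_id.
rewrite /inv_c /= rev_cons -cats1 circ_cat -/(inv_c c) IH /=.
by rewrite mul1op layer_inv adjoint_mul.
Qed.

Lemma size_inv m (c : circuit C m) : size (inv_c c) = size c.
Proof. by rewrite /inv_c size_rev size_map. Qed.

Lemma valid_inv (G : gate_class C) m (c : circuit C m) :
  (forall k (U : op k), G k U -> G k (adjoint U)) ->
  valid_circuit G c -> valid_circuit G (inv_c c).
Proof.
move=> Gadj Hc; apply: foldr_and_rev; move: Hc.
apply: foldr_and_map => L [H1 H2]; split.
  apply: foldr_and_rev; apply: foldr_and_map H1 => g [HG Hinj]; split => //=.
  exact: Gadj.
apply: pairwise_rev_sym; first by move=> x y; rewrite disjoint_sym.
by rewrite pairwise_map.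
Qed.

Lemma unitary_eq k (U : op k) : unitary U -> mulop (adjoint U) U = idop.
Proof.
move=> H; apply: functional_extensionality => x; apply: functional_extensionality => y.
by case: (H x y).
Qed.

Lemma circ_unitary (G : gate_class C) m (c : circuit C m) :
  (forall k (U : op k), G k U -> unitary U) ->
  valid_circuit G c -> mulop (adjoint (circ_op c)) (circ_op c) = idop.
Proof.
move=> Gu; elim: c => [|L c IH] /= ; first by rewrite adjoint_id mul1op.
move=> [[H1 _] Hc].
have HL : mulop (adjoint (layer_op L)) (layer_op L) = idop.
  elim: L H1 {Hc} => [|g L IHL] /=; first by rewrite adjoint_id mul1op.
  move=> [[HG Hinj] HL].
  rewrite adjoint_mul mulopA -(mulopA (adjoint (embed g))).
  rewrite embedE -Rl_adj -Rl_mul // unitary_eq ?Rl_id ?mul1op ?IHL //.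
  exact: Gu.
rewrite adjoint_mul mulopA -(mulopA (adjoint (circ_op c))) IH //.
by rewrite mul1op.
Qed.


Lemma Rl_ket k m (f : 'I_k -> 'I_m) (finj : injective f) (A : op k) b v :
  (forall y, A y (restr f b) = (y == v)%:R) ->
  apply (Rl f A) (ket b) = ket (merge b f v).
Proof.
move=> HA; rewrite apply_ket; apply: functional_extensionality => x.
rewrite /Rl /Defs.ket merge_eq //; case: ifP => //= _.
Qed.

Definition w2 m (c t : 'I_m) : 'I_2 -> 'I_m := fun j => if val j == 0%N then c else t.
Definition cnot_ga m (c t : 'I_m) : gate_app C m := GateApp (cnot C) (w2 c t).
Definition flip m (b : bits m) (c t : 'I_m) : bits m :=
  [ffun i => if i == t then b t (+) b c else b i].

Lemma w2_inj m (c t : 'I_m) : c != t -> injective (w2 c t).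
Proof.
move=> ct i j; rewrite /w2.
case: i => [[|[|i]] Hi] //; case: j => [[|[|j]] Hj] //=; try by move=> _; apply: val_inj.
  by move=> E; move: ct; rewrite E eqxx.
by move=> E; move: ct; rewrite E eqxx.
Qed.

Lemma cnot_apply m (c t : 'I_m) b : c != t ->
  apply (embed (cnot_ga c t)) (ket b) = ket (flip b c t).
Proof.
move=> ct; rewrite embedE /=.
rewrite (@Rl_ket _ _ _ (w2_inj ct) _ _ (cnot_map (restr (w2 c t) b))) //.
congr ket; apply/ffunP => i; rewrite /flip [in RHS]ffunE.
have H0 := merge_in (w2_inj ct) b (cnot_map (restr (w2 c t) b)) ord0.
have H1 := merge_in (w2_inj ct) b (cnot_map (restr (w2 c t) b)) ord_max.
change (w2 c t ord0) with c in H0; change (w2 c t ord_max) with t in H1.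
case: (boolP (i == t)) => [/eqP ->|Hit].
  by rewrite H1 !ffunE.
case: (boolP (i == c)) => [/eqP ->|Hic].
  by rewrite H0 !ffunE.
rewrite merge_out //; apply: img_notin => j; rewrite /w2.
by case: ifP => _; rewrite eq_sym.
Qed.

Definition xorsum k m (cc tt : 'I_k -> 'I_m) (s : seq 'I_k) (b : bits m) (i : 'I_m) :=
  \big[addb/false]_(j <- s | tt j == i) b (cc j).

Lemma cnot_layer_apply k m (cc tt : 'I_k -> 'I_m) (s : seq 'I_k) b :
  (forall j j', cc j != tt j') ->
  apply (layer_op (map (fun j => cnot_ga (cc j) (tt j)) s)) (ket b) =
  ket [ffun i => b i (+) xorsum cc tt s b i].
Proof.
move=> Hct; elim: s => [|j0 s IH] /=.
  rewrite apply_id; congr ket; apply/ffunP => i; rewrite ffunE /xorsum big_nil.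
  by rewrite addbF.
rewrite apply_mul IH cnot_apply //; congr ket; apply/ffunP => i.
rewrite /flip !ffunE /xorsum big_cons.
have -> : \big[addb/false]_(j <- s | tt j == cc j0) b (cc j) = false.
  by apply: big_pred0 => j; rewrite eq_sym (negbTE (Hct _ _)).
case: (boolP (i == tt j0)) => [/eqP ->|Hi].
  rewrite !eqxx; case: (b (tt j0)); case: (b (cc j0));
  by case: (\big[addb/false]_(j <- s | tt j == tt j0) b (cc j)).
by rewrite eq_sym (negbTE Hi).
Qed.

Lemma cnot_layer_valid (G : gate_class C) k m (cc tt : 'I_k -> 'I_m) :
  G 2%N (cnot C) -> injective cc -> injective tt -> (forall j j', cc j != tt j') ->
  valid_layer G (map (fun j => cnot_ga (cc j) (tt j)) (enum 'I_k)).
Proof.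
move=> GC ci ti Hct; split.
  elim: (enum 'I_k) => [|j s IH] //=; split => //; split => //.
  exact: w2_inj.
rewrite pairwise_map; apply: (sub_pairwise (r := fun x y => x != y)); last first.
  by have := enum_uniq 'I_k; rewrite uniq_pairwise.
move=> j j' /= Hjj'.
rewrite -setI_eq0; apply/eqP/setP => i; rewrite !inE.
apply/negbTE/andP => [[/imsetP [u _ ->] /imsetP [u' _ E]]].
move: E; rewrite /= /w2.
case: ifP => _; case: ifP => _ E.
- by move: Hjj'; rewrite (ci _ _ E) eqxx.
- by move: (Hct j j'); rewrite E eqxx.
- by move: (Hct j' j); rewrite E eqxx.
- by move: Hjj'; rewrite (ti _ _ E) eqxx.
Qed.

Definition hh (a b : bool) : C := (if a && b then -1 else 1) / sqrtC 2.
Definition h_ga m (i : 'I_m) : gate_app C m := GateApp (hadamard C) (fun _ : 'I_1 => i).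
Definition HS m (S : {set 'I_m}) : op m :=
  fun x y => if agree S x y then \prod_(i in S) hh (x i) (y i) else 0.

Lemma img_const m (i : 'I_m) : img (fun _ : 'I_1 => i) = [set i].
Proof.
apply/setP => j; rewrite inE; apply/imsetP/eqP => [[u _ ->] //|->].
by exists ord0.
Qed.

Lemma HS0 m : HS (set0 : {set 'I_m}) = idop.
Proof.
apply: functional_extensionality => x; apply: functional_extensionality => y.
rewrite /HS /Defs.idop big_set0.
have -> : agree set0 x y = (x == y).
  apply/agreeP/eqP => [H|-> //]; by apply/ffunP => i; apply: H; rewrite inE.
by case: (x == y).
Qed.

Lemma HS_step m (i : 'I_m) (S : {set 'I_m}) : i \notin S ->
  mulop (embed (h_ga i)) (HS S) = HS (i |: S).
Proof.
move=> iS.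
apply: functional_extensionality => x; apply: functional_extensionality => z.
rewrite /mulop embedE /= /Rl img_const.
pose y0 : bits m := [ffun j => if j == i then z i else x j].
rewrite (bigD1 y0) //= big1 ?addr0; last first.
  move=> y Hy; case: ifP => H1; last by rewrite mul0r.
  rewrite /HS; case: ifP => H2; last by rewrite mulr0.
  case/eqP: Hy; apply/ffunP => j; rewrite ffunE.
  case: ifP => [/eqP ->|/negbT Hj].
    by move/agreeP: H2; apply.
  by move/agreeP: H1 => -> //; rewrite inE.
have Hag : agree [set i] x y0.
  by apply/agreeP => j; rewrite inE ffunE => /negbTE ->.
rewrite Hag /HS.
have -> : agree S y0 z = agree (i |: S) x z.
  apply/agreeP/agreeP => H j; rewrite ?inE => Hj.
    move: Hj; rewrite negb_or => /andP [Hji HjS].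
    by rewrite -H // ffunE (negbTE Hji).
  rewrite ffunE; case: ifP => [/eqP -> | Hji]; first by [].
  by apply: H; rewrite !inE Hji.
case: ifP => _; last by rewrite mulr0.
rewrite big_setU1 //=.
rewrite /hadamard !ffunE eqxx; congr (_ * _).
apply: eq_bigr => j Hj; rewrite ffunE.
by case: ifP => // /eqP E; move: iS; rewrite -E Hj.
Qed.

Lemma layer_H m (s : seq 'I_m) : uniq s ->
  layer_op (map (@h_ga m) s) = HS [set i in s].
Proof.
elim: s => [|i s IH] /=; first by move=> _; rewrite -HS0; congr HS; apply/setP => i; rewrite !inE.
move=> /andP [Hi Hs]; rewrite IH // HS_step; last by rewrite inE.
by congr HS; apply/setP => j; rewrite !inE.
Qed.

Lemma H_layer_valid (G : gate_class C) m (s : seq 'I_m) :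
  G 1%N (hadamard C) -> uniq s -> valid_layer G (map (@h_ga m) s).
Proof.
move=> GH us; split.
  elim: s {us} => [|j s IH] //=; split => //; split => //.
  by move=> u v _; rewrite (ord1 u) (ord1 v).
rewrite pairwise_map; move: us; rewrite uniq_pairwise; apply: sub_pairwise.
move=> i j /= Hij; rewrite /ga_wires /= -!/(img _) !img_const.
rewrite -setI_eq0; apply/eqP/setP => u; rewrite !inE.
by apply/negbTE/andP => [[/eqP -> /eqP E]]; move: Hij; rewrite E eqxx.
Qed.


Definition sg (b : bool) : C := if b then -1 else 1.
Definition dot k (u w : bits k) : bool := \big[addb/false]_j (u j && w j).

Lemma sgD a b : sg (a (+) b) = sg a * sg b.
Proof. by case: a; case: b; rewrite /sg /= ?mulr1 ?mul1r ?mulrNN ?mulr1. Qed.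

Lemma prod_sg k (F : 'I_k -> bool) : \prod_j sg (F j) = sg (\big[addb/false]_j F j).
Proof. by rewrite (big_morph sg sgD (erefl (sg false))). Qed.

Lemma prod_const_ord k (x : C) : \prod_(j < k) x = x ^+ k.
Proof. by rewrite -[in RHS](card_ord k) -prodr_const; apply: eq_bigl. Qed.

Lemma prod_hh k (u w : bits k) :
  \prod_(j < k) hh (u j) (w j) = sg (dot u w) * (sqrtC 2)^-1 ^+ k.
Proof.
rewrite /hh big_split /= prod_sg; congr (_ * _); exact: prod_const_ord.
Qed.

Lemma dot_sym k (u w : bits k) : dot u w = dot w u.
Proof. by apply: eq_bigr => j _; rewrite andbC. Qed.

Lemma dot_xor k (y x u : bits k) :
  dot y x (+) dot y u = dot y [ffun j => x j (+) u j].
Proof.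
rewrite /dot -big_split /=; apply: eq_bigr => j _; rewrite ffunE.
by case: (y j); case: (x j); case: (u j).
Qed.

Lemma charsum k (w : bits k) :
  \sum_(y : bits k) sg (dot y w) = if w == zeros k then 2%:R ^+ k else 0.
Proof.
under eq_bigr do rewrite -prod_sg.
rewrite -(bigA_distr_bigA (fun j b => sg (b && w j))) /=.
under eq_bigr do rewrite big_bool /=.
case: eqP => [->|/eqP Hw].
  rewrite -prod_const_ord; apply: eq_bigr => j _; by rewrite /sg ffunE.
have [j Hj] : exists j, w j.
  apply/existsP; apply: contraR Hw => /existsPn H; apply/eqP/ffunP => j.
  by rewrite ffunE; apply/negbTE.
by rewrite (bigD1 j) //= Hj /sg addNr mul0r.
Qed.

Lemma sqrt2_inv k : (sqrtC (2 : C))^-1 ^+ k * (sqrtC (2 : C))^-1 ^+ k * 2%:R ^+ k = 1.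
Proof.
rewrite -!exprMn.
have H2 : (2 : C) != 0 by rewrite pnatr_eq0.
have -> : (sqrtC (2 : C))^-1 * (sqrtC 2)^-1 = 2^-1.
  by rewrite -invrM ?unitfE ?sqrtC_eq0 // -expr2 sqrtCK.
by rewrite mulVf // expr1n.
Qed.

Lemma hmh_scalar k (M N : bits k -> bits k)
  (Hd : forall v y, dot v (M y) = dot (N v) y) (Ninv : involutive N) (x v : bits k) :
  \sum_(y : bits k) (\prod_j hh (y j) (x j)) * (\prod_j hh (v j) (M y j)) =
  (v == N x)%:R.
Proof.
under eq_bigr => y _ do rewrite !prod_hh Hd (dot_sym (N v)) mulrACA -sgD dot_xor.
rewrite -mulr_suml charsum.
have -> : ([ffun j => x j (+) N v j] == zeros k) = (v == N x).
  apply/eqP/eqP => [H|->].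
    have -> : x = N v by apply/ffunP => j; move/ffunP: H => /(_ j); rewrite !ffunE; case: (x j); case: (N v j).
    by rewrite Ninv.
  by apply/ffunP => j; rewrite !ffunE Ninv addbb.
case: (v == N x); last by rewrite mul0r.
by rewrite mulrC sqrt2_inv.
Qed.


Lemma xorsum_odd k (P : pred 'I_k) (b : 'I_k -> bool) :
  \big[addb/false]_(j | P j) b j = odd #|[set j | P j && b j]|.
Proof.
rewrite cardsE -sum1_card.
rewrite (big_morph odd (id1 := false) (op1 := addb)) ?odd_add //=.
transitivity (\big[addb/false]_(j | P j) (if b j then true else false)).
  by apply: eq_bigr => j _; case: (b j).
rewrite -big_mkcondr; apply: eq_bigl => j //.
by move=> x y; rewrite oddD.
Qed.

Lemma Mod2E n (v : bits n.+1) :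
  Mod_q 2 v = \big[addb/false]_(j | j != ord_max) v j.
Proof.
rewrite /Mod_q modn2 xorsum_odd.
by case: (odd _).
Qed.

Lemma dot_fanout n (v y : bits n.+1) : dot v (fanout_map y) = dot (parity_map v) y.
Proof.
rewrite /dot (bigD1 ord_max) // [in RHS](bigD1 ord_max) //= !ffunE eqxx.
have E1 : \big[addb/false]_(j | j != ord_max) (v j && [ffun i => if i == ord_max then y i else y i (+) y ord_max] j)
  = \big[addb/false]_(j | j != ord_max) (v j && y j) (+)
    (\big[addb/false]_(j | j != ord_max) v j && y ord_max).
  case: (y ord_max).
  - rewrite andbT -big_split /=; apply: eq_bigr => j /negbTE Hj; rewrite ffunE Hj.
    by case: (v j); case: (y j).
  - rewrite andbF addbF; apply: eq_bigr => j /negbTE Hj; rewrite ffunE Hj.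
    by rewrite addbF.
have E2 : \big[addb/false]_(j | j != ord_max)
   ([ffun i => if i == ord_max then v i (+) Mod_q 2 v else v i] j && y j)
  = \big[addb/false]_(j | j != ord_max) (v j && y j).
  by apply: eq_bigr => j /negbTE Hj; rewrite ffunE Hj.
rewrite E1 E2 Mod2E.
set A := \big[addb/false]_(j | j != ord_max) (v j && y j).
set B := \big[addb/false]_(j | j != ord_max) v j.
by case: (v ord_max); case: (y ord_max); case: A; case: B.
Qed.

Lemma Mod2_parity n (v : bits n.+1) : Mod_q 2 (parity_map v) = Mod_q 2 v.
Proof.
rewrite !Mod2E; apply: eq_bigr => j /negbTE Hj; by rewrite ffunE Hj.
Qed.

Lemma parity_inv n : involutive (@parity_map n).
Proof.
move=> v; apply/ffunP => i; rewrite !ffunE Mod2_parity.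
by case: (i == ord_max) => //; rewrite -addbA addbb addbF.
Qed.

Lemma fanout_inv n : involutive (@fanout_map n).
Proof.
move=> v; apply/ffunP => i; rewrite !ffunE.
by rewrite eqxx; case: (i == ord_max) => //; rewrite -addbA addbb addbF.
Qed.

Lemma dot_parity n (v y : bits n.+1) : dot v (parity_map y) = dot (fanout_map v) y.
Proof. by rewrite dot_sym -dot_fanout dot_sym. Qed.


Lemma apply_sum m (I : finType) (A : op m) (cf : I -> C) (p : I -> state m) :
  apply A (fun z => \sum_(y : I) cf y * p y z) = fun z => \sum_(y : I) cf y * apply A (p y) z.
Proof.
apply: functional_extensionality => x; rewrite /apply.
under eq_bigr do rewrite mulr_sumr.
rewrite exchange_big /=; apply: eq_bigr => y _.
rewrite mulr_sumr; apply: eq_bigr => w _.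
by rewrite mulrCA.
Qed.

Section Pad.
Variables (n a : nat).
Notation W := (img (@lshift n a)).

Lemma padL (x : bits n) j : pad a x (lshift a j) = x j.
Proof.
rewrite /pad ffunE; case: split_ordP => [j' /lshift_inj -> // | k' /eqP].
by rewrite eq_lrshift.
Qed.

Lemma padR (x : bits n) k : pad a x (rshift n k) = false.
Proof.
rewrite /pad ffunE; case: split_ordP => [j' /eqP | //].
by rewrite eq_rlshift.
Qed.

Lemma pad_merge (x y : bits n) : pad a y = merge (pad a x) (@lshift n a) y.
Proof.
apply/ffunP => i; case: (split_ordP i) => [j -> | k ->].
  by rewrite padL merge_in //; apply: lshift_inj.
rewrite padR merge_out ?padR //; apply: img_notin => j.
by rewrite eq_lrshift.
Qed.

Lemma agree_pad (z : bits (n + a)) (u u' : bits n) :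
  agree W z (pad a u) = agree W z (pad a u').
Proof.
have H : forall u u', agree W z (pad a u) -> agree W z (pad a u').
  move=> v v' H; apply: (agree_trans H).
  by rewrite (pad_merge v' v); apply: agree_merge.
by apply/idP/idP; apply: H.
Qed.

Lemma ket_pad (z : bits (n + a)) (u : bits n) :
  ket (pad a u) z = (agree W z (pad a u) && (restr (@lshift n a) z == u))%:R.
Proof.
by rewrite /Defs.ket {1}(pad_merge u u) merge_eq //; apply: lshift_inj.
Qed.

Lemma HS_pad (z : bits (n + a)) (u : bits n) :
  HS W z (pad a u) = (agree W z (pad a u))%:R *
     \prod_j hh (restr (@lshift n a) z j) (u j).
Proof.
rewrite /HS; case: ifP => _; rewrite ?mul0r // mul1r.
rewrite big_imset /=; last by move=> i j _ _; apply: lshift_inj.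
apply: eq_bigr => j _; by rewrite padL ffunE.
Qed.

End Pad.

Definition HL n a : layer C (n.+1 + a) :=
  map (@h_ga _) (map (@lshift n.+1 a) (enum 'I_n.+1)).

Lemma HL_op n a : layer_op (HL n a) = HS (img (@lshift n.+1 a)).
Proof.
rewrite /HL layer_H; last first.
  by rewrite map_inj_uniq ?enum_uniq //; apply: lshift_inj.
congr HS; apply/setP => i; rewrite inE; apply/mapP/imsetP => [[j _ ->]|[j _ ->]].
  by exists j.
by exists j; rewrite ?mem_enum.
Qed.

Lemma hmh_implements n a (c : circuit C (n.+1 + a)) (M N : bits n.+1 -> bits n.+1) :
  (forall v y, dot v (M y) = dot (N v) y) -> involutive N ->
  implements c M -> implements ([:: HL n a] ++ c ++ [:: HL n a]) N.
Proof.
move=> Hd Ninv Hc x.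
rewrite !circ_cat /= !mul1op HL_op !apply_mul.
set W := img (@lshift n.+1 a).
have S1 : apply (HS W) (ket (pad a x)) =
   fun z => \sum_(y : bits n.+1) (\prod_j hh (y j) (x j)) * ket (pad a y) z.
  rewrite apply_ket; apply: functional_extensionality => z.
  rewrite HS_pad.
  apply/esym.
  rewrite (eq_bigr (fun y : bits n.+1 => (agree W z (pad a x))%:R *
     (\prod_j hh (y j) (x j) * (restr (@lshift n.+1 a) z == y)%:R))); last first.
    by move=> y _; rewrite (ket_pad z y) (agree_pad z y x) -mulnb natrM mulrCA.
  rewrite -mulr_sumr; congr (_ * _).
  rewrite -[RHS](sum_delta' (restr (@lshift n.+1 a) z) (fun y : bits n.+1 => \prod_j hh (y j) (x j))).
  by apply: eq_bigr => y _; rewrite eq_sym.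
rewrite S1 apply_sum.
have S2 : (fun z => \sum_(y : bits n.+1) (\prod_j hh (y j) (x j)) * apply (circ_op c) (ket (pad a y)) z)
  = fun z => \sum_(y : bits n.+1) (\prod_j hh (y j) (x j)) * ket (pad a (M y)) z.
  by apply: functional_extensionality => z; apply: eq_bigr => y _; rewrite Hc.
rewrite S2.
rewrite apply_sum; apply: functional_extensionality => z.
under eq_bigr => y _ do rewrite apply_ket HS_pad (agree_pad z (M y) x) mulrCA.
rewrite -mulr_sumr (hmh_scalar Hd Ninv) ket_pad (agree_pad z (N x) x).
by rewrite -mulnb natrM.
Qed.

Lemma hmh_valid (G : gate_class C) n a (c : circuit C (n.+1 + a)) :
  G 1%N (hadamard C) -> valid_circuit G c ->
  valid_circuit G ([:: HL n a] ++ c ++ [:: HL n a]).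
Proof.
move=> GH Hc.
have HV : valid_layer G (HL n a).
  apply: H_layer_valid => //.
  by rewrite map_inj_uniq ?enum_uniq //; apply: lshift_inj.
apply/foldr_and_cat; split; first by split.
by apply/foldr_and_cat; split => //; split.
Qed.


Lemma xorsum_hit k m (cc tt : 'I_k -> 'I_m) (ti : injective tt) b j0 :
  xorsum cc tt (enum 'I_k) b (tt j0) = b (cc j0).
Proof.
rewrite /xorsum big_enum_cond /= (big_pred1 j0) // => j.
by rewrite inE; apply/eqP/eqP => [/ti|->].
Qed.

Lemma xorsum_miss k m (cc tt : 'I_k -> 'I_m) s b i :
  (forall j, tt j != i) -> xorsum cc tt s b i = false.
Proof. by move=> H; apply: big_pred0 => j; apply/negbTE. Qed.

Lemma pad_lt n a (y : bits n) (i : 'I_(n + a)) (H : ((i : nat) < n)%N) :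
  pad a y i = y (Ordinal H).
Proof.
case: (split_ordP i) => [j E | k E]; subst i.
  by rewrite padL; congr (y _); apply: val_inj.
by exfalso; move: H; rewrite /= ltnNge leq_addr.
Qed.

Lemma pad_ge n a (y : bits n) (i : 'I_(n + a)) : (n <= i)%N -> pad a y i = false.
Proof.
case: (split_ordP i) => [j E | k E]; subst i; last by rewrite padR.
by rewrite /= leqNgt ltn_ord.
Qed.

Section CatFanout.
Variable n : nat.
Hypothesis n_pos : (0 < n)%N.

Lemma f1_lt (j : 'I_n) : (n + j < n.+1 + (n - 1))%N.
Proof. have := ltn_ord j; lia. Qed.
Lemma t1_lt (j : 'I_n) : ((j : nat) < n.+1 + (n - 1))%N.
Proof. have := ltn_ord j; lia. Qed.
Definition f1 (j : 'I_n) : 'I_(n.+1 + (n - 1)) := Ordinal (f1_lt j).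
Definition t1 (j : 'I_n) : 'I_(n.+1 + (n - 1)) := Ordinal (t1_lt j).

Lemma f1_inj : injective f1.
Proof. move=> i j /(congr1 val) /= /eqP; rewrite eqn_add2l => /eqP; exact: val_inj. Qed.
Lemma t1_inj : injective t1.
Proof. move=> i j /(congr1 val) /= E; exact: val_inj. Qed.
Lemma ft1 j j' : f1 j != t1 j'.
Proof. apply/eqP => /(congr1 val) /=; have := ltn_ord j'; lia. Qed.

Definition Phi (x : bits n.+1) : bits (n.+1 + (n - 1)) :=
  merge (pad (n - 1) x) f1 (if x ord_max then ones n else zeros n).

Definition L1 : layer C (n.+1 + (n - 1)) :=
  map (fun j => cnot_ga (f1 j) (t1 j)) (enum 'I_n).

Lemma restr_f1 (y : bits n.+1) :
  restr f1 (pad (n - 1) y) = if y ord_max then e0 n else zeros n.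
Proof.
apply/ffunP => j; rewrite ffunE.
case: (boolP (val j == 0%N)) => [/eqP j0 | j0].
  have H : ((f1 j : nat) < n.+1)%N by rewrite /= j0 addn0.
  rewrite (pad_lt _ H); have -> : Ordinal H = ord_max by apply: val_inj; rewrite /= j0 addn0.
  by case: (y ord_max); rewrite /e0 /zeros ffunE // j0.
rewrite pad_ge /=; last first.
  by move: j0; rewrite -lt0n => H; rewrite -[X in (X < _)%N]addn0 ltn_add2l.
by case: (y ord_max); rewrite /e0 /zeros ffunE // (negbTE j0).
Qed.

Lemma L1_apply x : apply (layer_op L1) (ket (Phi x)) = ket (Phi (fanout_map x)).
Proof.
rewrite cnot_layer_apply; last exact: ft1.
congr ket; apply/ffunP => i; rewrite ffunE.
have Ef : forall j y, Phi y (f1 j) = y ord_max.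
  by move=> j y; rewrite /Phi merge_in; [case: (y ord_max); rewrite ffunE|apply: f1_inj].
have Hfmax : fanout_map x ord_max = x ord_max by rewrite ffunE eqxx.
case: (ltnP i n) => Hi.
  have -> : i = t1 (Ordinal Hi) by apply: val_inj.
  rewrite xorsum_hit; last exact: t1_inj.
  rewrite !Ef /Phi !merge_out; try by apply: img_notin => j; exact: ft1.
  have H : ((t1 (Ordinal Hi) : nat) < n.+1)%N by rewrite /= ltnS ltnW.
  rewrite !(pad_lt _ H) ffunE.
  have -> : (Ordinal H == ord_max) = false.
    by apply/negbTE; rewrite -val_eqE /= neq_ltn Hi.
  by [].
rewrite xorsum_miss; last by move=> j; apply/eqP => /(congr1 val) /= E; move: Hi; rewrite -E leqNgt ltn_ord.
rewrite addbF.
have Hj : (i - n < n)%N by have := ltn_ord i; have := n_pos; lia.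
have -> : i = f1 (Ordinal Hj) by apply: val_inj => /=; have := n_pos; lia.
by rewrite !Ef Hfmax.
Qed.



Lemma cat_basis (c : circuit C n) :
  (forall alpha beta : C,
      apply (circ_op c) (fun x => alpha * ket (zeros n) x + beta * ket (e0 n) x)
      = (fun x => alpha * ket (zeros n) x + beta * ket (ones n) x)) ->
  (forall y, circ_op c y (zeros n) = (y == zeros n)%:R) /\
  (forall y, circ_op c y (e0 n) = (y == ones n)%:R).
Proof.
move=> H; split => y.
  have := congr1 (fun f => f y) (H 1 0).
  by rewrite apply_lin2 !apply_ket /= !mul1r !mul0r !addr0.
have := congr1 (fun f => f y) (H 0 1).
by rewrite apply_lin2 !apply_ket /= !mul1r !mul0r !add0r.
Qed.

Lemma cat_to_fanout (G : gate_class C) d (c : circuit C n) :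
  (forall k (U : op k), G k U -> unitary U) ->
  (forall k (U : op k), G k U -> G k (adjoint U)) ->
  G 2%N (cnot C) ->
  valid_circuit G c -> depth_le c d ->
  (forall alpha beta : C,
      apply (circ_op c) (fun x => alpha * ket (zeros n) x + beta * ket (e0 n) x)
      = (fun x => alpha * ket (zeros n) x + beta * ket (ones n) x)) ->
  fanout_in_depth G n (d + (1 + d)).
Proof.
move=> Gu Gadj GC Hv Hd Hcat.
have [Hz He] := cat_basis Hcat.
exists (n - 1)%N; split => //.
exists (relabel_c f1 c ++ [:: L1] ++ inv_c (relabel_c f1 c)).
have Hvr : valid_circuit G (relabel_c f1 c) by apply: valid_relabel => //; exact: f1_inj.
split.
  apply/foldr_and_cat; split => //; apply/foldr_and_cat; split; last exact: valid_inv.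
  split => //; apply: cnot_layer_valid => //; [exact: f1_inj|exact: t1_inj|exact: ft1].
split.
  rewrite /depth_le !size_cat size_inv /relabel_c size_map /=.
  by move: Hd; rewrite /depth_le => Hd; rewrite leq_add // leq_add2l.
move=> x.
have A1 : forall y, apply (circ_op (relabel_c f1 c)) (ket (pad (n - 1) y)) = ket (Phi y).
  move=> y; rewrite circ_relabel; last exact: f1_inj.
  apply: Rl_ket; first exact: f1_inj.
  by move=> z; rewrite restr_f1; case: (y ord_max).
rewrite !circ_cat /= mul1op circ_inv !apply_mul A1 L1_apply -A1.
by rewrite -apply_mul (circ_unitary Gu Hvr) apply_id.
Qed.

End CatFanout.


Lemma pad_zeros k a : pad a (zeros k) = zeros (k + a).
Proof. by apply/ffunP => i; rewrite !ffunE; case: split => j; rewrite ?ffunE. Qed.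

Lemma fanout_zeros k : fanout_map (zeros k.+1) = zeros k.+1.
Proof. by apply/ffunP => i; rewrite !ffunE; case: ifP. Qed.

Lemma merge_zeros k m (f : 'I_k -> 'I_m) : merge (zeros m) f (zeros k) = zeros m.
Proof. by apply/ffunP => i; rewrite !ffunE; case: pickP => *; rewrite ?ffunE. Qed.

Section FanoutCat.
Variables (n m a : nat).
Hypothesis HN : (m.+1 + a <= n)%N.
Hypothesis Hn2 : (n <= m.+1 + m.+1)%N.

Definition g2 (i : nat) : nat := if i == 0%N then m else if i == m then 0%N else i.

Lemma g2_lt i : (i < m.+1 + a)%N -> (g2 i < m.+1 + a)%N.
Proof. rewrite /g2; case: ifP => _; [lia|case: ifP => _; lia]. Qed.

Lemma g2E0 : g2 0 = m.
Proof. by []. Qed.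
Lemma g2Em : m != 0%N -> g2 m = 0%N.
Proof. by move=> H; rewrite /g2 (negbTE H) eqxx. Qed.
Lemma g2E i : i != 0%N -> i != m -> g2 i = i.
Proof. by move=> H1 H2; rewrite /g2 (negbTE H1) (negbTE H2). Qed.

Lemma g2K i : g2 (g2 i) = i.
Proof.
case: (eqVneq i 0%N) => [->|H0].
  by rewrite g2E0; case: (eqVneq m 0%N) => Hm; [rewrite {1}Hm g2E0|rewrite g2Em].
case: (eqVneq i m) => [E|Hm]; first by subst i; rewrite g2Em // g2E0.
by rewrite !g2E.
Qed.

Lemma g2_0 i : (g2 i == 0%N) = (i == m).
Proof.
case: (eqVneq i 0%N) => [->|H0]; first by rewrite g2E0 eq_sym.
case: (eqVneq i m) => [E|Hm]; first by subst i; rewrite g2Em // eqxx.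
by rewrite g2E // (negbTE H0).
Qed.

Lemma g2_le i : (g2 i <= m)%N = (i <= m)%N.
Proof.
case: (eqVneq i 0%N) => [->|H0]; first by rewrite g2E0 leqnn.
case: (eqVneq i m) => [E|Hm]; first by subst i; rewrite g2Em // leqnn.
by rewrite g2E.
Qed.

Lemma f2_lt (i : 'I_(m.+1 + a)) : (g2 i < n)%N.
Proof. by apply: leq_trans HN; apply: g2_lt. Qed.
Definition f2 (i : 'I_(m.+1 + a)) : 'I_n := Ordinal (f2_lt i).

Lemma f2_inj : injective f2.
Proof.
move=> i j /(congr1 val) /= E; apply: val_inj.
by rewrite /= -[LHS]g2K E g2K.
Qed.

Definition ectrl : bits m.+1 := [ffun i => i == ord_max].

Lemma restr_f2_zeros : restr f2 (zeros n) = pad a (zeros m.+1).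
Proof. by rewrite pad_zeros; apply/ffunP => i; rewrite !ffunE. Qed.

Lemma restr_f2_e0 : restr f2 (e0 n) = pad a ectrl.
Proof.
apply/ffunP => j; rewrite [LHS]ffunE [LHS]ffunE /= g2_0.
case: (ltnP j m.+1) => Hj.
  by rewrite (pad_lt _ Hj) ffunE -val_eqE.
rewrite pad_ge //; apply/negbTE; move: Hj; rewrite ltnNge; apply: contra => /eqP ->.
by [].
Qed.

Lemma fanout_ectrl : fanout_map ectrl = ones m.+1.
Proof.
apply/ffunP => i; rewrite !ffunE eqxx addbT.
by case: (i == ord_max).
Qed.

Definition B2 : bits n := merge (e0 n) f2 (pad a (ones m.+1)).

Lemma B2E i : B2 i = (i <= m)%N.
Proof.
case: (ltnP i (m.+1 + a)) => Hi.
  have Hj : (g2 i < m.+1 + a)%N by apply: g2_lt.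
  have -> : i = f2 (Ordinal Hj) by apply: val_inj; rewrite /= g2K.
  rewrite /B2 merge_in; last exact: f2_inj.
  rewrite /= g2K; case: (ltnP (g2 i) m.+1) => Hg.
    by rewrite (@pad_lt _ _ _ (Ordinal Hj) Hg) ffunE -g2_le.
  by rewrite (@pad_ge _ _ _ (Ordinal Hj) Hg) -g2_le leqNgt Hg.
rewrite /B2 merge_out; last first.
  apply: img_notin => j; apply/eqP => /(congr1 val) /= E.
  by move: (g2_lt (ltn_ord j)); rewrite E ltnNge Hi.
rewrite ffunE.
have Hm : (m < i)%N by apply: leq_trans Hi; rewrite leq_addr.
rewrite leqNgt Hm /=; apply/negbTE; rewrite -lt0n.
exact: leq_ltn_trans (leq0n m) Hm.
Qed.



Lemma tt2_lt (j : 'I_(n - m.+1)) : (m.+1 + j < n)%N.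
Proof. have := ltn_ord j; lia. Qed.
Lemma cc2_lt (j : 'I_(n - m.+1)) : (j < n)%N.
Proof. have := ltn_ord j; lia. Qed.
Definition tt2 j : 'I_n := Ordinal (tt2_lt j).
Definition cc2 j : 'I_n := Ordinal (cc2_lt j).

Lemma tt2_inj : injective tt2.
Proof. move=> i j /(congr1 val) /= /eqP; rewrite eqn_add2l => /eqP; exact: val_inj. Qed.
Lemma cc2_inj : injective cc2.
Proof. move=> i j /(congr1 val) /= E; exact: val_inj. Qed.
Lemma ct2 j j' : cc2 j != tt2 j'.
Proof. apply/eqP => /(congr1 val) /=; have := ltn_ord j; have := ltn_ord j'; lia. Qed.

Definition L2 : layer C n := map (fun j => cnot_ga (cc2 j) (tt2 j)) (enum 'I_(n - m.+1)).

Lemma L2_zeros : apply (layer_op L2) (ket (zeros n)) = ket (zeros n).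
Proof.
rewrite cnot_layer_apply; last exact: ct2.
congr ket; apply/ffunP => i; rewrite !ffunE /xorsum big1 // => j _.
by rewrite ffunE.
Qed.

Lemma L2_B2 : apply (layer_op L2) (ket B2) = ket (ones n).
Proof.
rewrite cnot_layer_apply; last exact: ct2.
congr ket; apply/ffunP => i; rewrite [LHS]ffunE B2E /ones ffunE.
case: (leqP i m) => Hi.
  rewrite xorsum_miss //= => j; apply/eqP => /(congr1 val) /= E.
  by move: Hi; rewrite -E ltnNge leq_addr.
have Hj : (i - m.+1 < n - m.+1)%N by have := ltn_ord i; lia.
have -> : i = tt2 (Ordinal Hj) by apply: val_inj => /=; lia.
rewrite xorsum_hit; last exact: tt2_inj.
rewrite B2E /=; apply/eqP; lia.
Qed.

Lemma fanout_to_cat_gen (G : gate_class C) d (c : circuit C (m.+1 + a)) :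
  G 2%N (cnot C) -> valid_circuit G c -> depth_le c d -> implements c (@fanout_map m) ->
  cat_in_depth G n d.+1.
Proof.
move=> GC Hv Hd Hc.
exists (relabel_c f2 c ++ [:: L2]); split.
  apply/foldr_and_cat; split; first by apply: valid_relabel => //; exact: f2_inj.
  split => //; apply: cnot_layer_valid => //; [exact: cc2_inj|exact: tt2_inj|exact: ct2].
split.
  by rewrite /depth_le size_cat /relabel_c size_map addn1 ltnS.
move=> al be.
have Hcf : forall y z, circ_op c z (pad a y) = (z == pad a (fanout_map y))%:R.
  by move=> y z; have := congr1 (fun f => f z) (Hc y); rewrite apply_ket.
rewrite circ_cat /= mul1op circ_relabel; last exact: f2_inj.
rewrite apply_mul apply_lin2 apply_lin2.
rewrite (@Rl_ket _ _ _ f2_inj _ _ (pad a (fanout_map (zeros m.+1)))); last first.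
  by move=> z; rewrite restr_f2_zeros Hcf.
rewrite (@Rl_ket _ _ _ f2_inj _ _ (pad a (fanout_map ectrl))); last first.
  by move=> z; rewrite restr_f2_e0 Hcf.
rewrite fanout_zeros pad_zeros merge_zeros fanout_ectrl -/B2.
by rewrite L2_zeros L2_B2.
Qed.

End FanoutCat.

End Q.

Lemma cat_one (C : numClosedFieldType) (G : gate_class C) d : cat_in_depth G 1 d.
Proof.
exists [::]; split => //; split => //.
move=> al be; rewrite /= apply_id.
have -> : e0 1 = ones 1 by apply/ffunP => i; rewrite !ffunE (ord1 i).
by [].
Qed.

Theorem mainTheorem1 (C : numClosedFieldType) (G : gate_class C)
  (G_unitary : forall k (U : op C k), G k U -> unitary U)
  (G_adjoint : forall k (U : op C k), G k U -> G k (adjoint U))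
  (G_H : G 1%N (hadamard C)) (G_CNOT : G 2%N (cnot C)) :
  ((exists d, forall n, (0 < n)%N -> cat_in_depth G n d) <->
   (exists d, forall n, (0 < n)%N -> fanout_in_depth G n d)) /\
  ((exists d, forall n, (0 < n)%N -> fanout_in_depth G n d) <->
   (exists d, forall n, (0 < n)%N -> parity_in_depth G n d)).
Proof.
split; split.
- case=> d Hd; exists (d + (1 + d))%N => n Hn.
  case: (Hd n Hn) => c [Hv [Hdep Hcat]].
  exact: (@cat_to_fanout C n Hn G d c G_unitary G_adjoint G_CNOT Hv Hdep Hcat).
- case=> d Hd; exists d.+1 => n Hn.
  case: (eqVneq n 1%N) => [->|Hn1]; first exact: cat_one.
  have Hodd := odd_double_half n; rewrite -muln2 in Hodd.
  have Hm : (0 < n./2)%N.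
    by move: Hn Hn1 Hodd; case: (odd n) => /=; lia.
  case: (Hd _ Hm) => a [Ha [c [Hv [Hdep Himp]]]].
  have HN : ((n./2).+1 + a <= n)%N.
    by move: Ha Hm Hodd; case: (odd n) => /=; lia.
  have Hn2 : (n <= (n./2).+1 + (n./2).+1)%N.
    by move: Hodd; case: (odd n) => /=; lia.
  exact: (@fanout_to_cat_gen C n (n./2) a HN Hn2 G d c G_CNOT Hv Hdep Himp).
- case=> d Hd; exists d.+2 => n Hn.
  case: (Hd n Hn) => a [Ha [c [Hv [Hdep Himp]]]].
  exists a; split => //; exists ([:: HL C n a] ++ c ++ [:: HL C n a]); split.
    exact: hmh_valid.
  split.
    by move: Hdep; rewrite /depth_le !size_cat /= addn1 add1n ltnS ltnS.
  apply: hmh_implements Himp; [exact: dot_fanout|exact: parity_inv].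
- case=> d Hd; exists d.+2 => n Hn.
  case: (Hd n Hn) => a [Ha [c [Hv [Hdep Himp]]]].
  exists a; split => //; exists ([:: HL C n a] ++ c ++ [:: HL C n a]); split.
    exact: hmh_valid.
  split.
    by move: Hdep; rewrite /depth_le !size_cat /= addn1 add1n ltnS ltnS.
  apply: hmh_implements Himp; [exact: dot_parity|exact: fanout_inv].
Qed.
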